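(* Let $X,Y,Z$ be topological spaces and $f:X\times Y\to Z$ a mapping. Suppose that for each $x\in X$, $f_x$ is quasicontinuous and there is a dense set $D_x\subset Y$ such that $f^y$ is quasicontinuous at $x$ for every $y\in D_x$. Then $f$ is lower $X$-quasicontinuous (at every point of $X\times Y$); equivalently, for every nonempty open $V\subset Y$ the set-valued mapping $X\ni x\mapsto f_x(V)\in 2^Z$ is lower quasicontinuous.
   Context: $f_x:Y\to Z$ and $f^y:X\to Z$ are given by $f_x(y)=f^y(x)=f(x,y)$; $2^Z$ is the set of nonempty subsets of $Z$. A mapping $g:X\to Z$ is quasicontinuous at $a$ if for each neighborhood $U$ of $a$ and each neighborhood $W$ of $g(a)$ there is an open $O$ with $\emptyset\neq O\subset U$ and $g(O)\subset W$; $g$ is quasicontinuous if it is so at every point. A set-valued $F:X\to 2^Z$ is lower quasicontinuous if for each $x_0\in X$, each neighborhood $U$ of $x_0$ and each open $W\subset Z$ with $F(x_0)\cap W\ne\emptyset$, there is an open $O$ with $\emptyset\ne O\subset U$ and $F(x)\cap W\ne\emptyset$ for all $x\in O$. $f$ is lower $X$-quasicontinuous at $(a,b)$ if for each neighborhood $U$ of $a$, $V$ of $b$, $W$ of $f(a,b)$, there is an open $O\subset X$ with $\emptyset\ne O\subset U$ and $f(\{x\}\times V)\cap W\ne\emptyset$ for all $x\in O$. *)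

(* Defs.v *)
From Stdlib Require Import Classical.

Record TopSpace := {
  carrier :> Type;
  is_open : (carrier -> Prop) -> Prop;
  open_full : is_open (fun _ => True);
  open_inter : forall A B, is_open A -> is_open B -> is_open (fun x => A x /\ B x);
  open_union : forall (F : (carrier -> Prop) -> Prop),
      (forall A, F A -> is_open A) -> is_open (fun x => exists A, F A /\ A x)
}.

Arguments is_open {t} _.

Definition nbhd {T : TopSpace} (x : T) (U : T -> Prop) : Prop :=
  exists O, is_open O /\ O x /\ (forall z, O z -> U z).

Definition dense {T : TopSpace} (D : T -> Prop) : Prop :=
  forall O, is_open O -> (exists z, O z) -> exists z, O z /\ D z.

Definition quasicont_at {X Z : TopSpace} (g : X -> Z) (a : X) : Prop :=
  forall U W, nbhd a U -> nbhd (g a) W ->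
    exists O, is_open O /\ (exists x, O x) /\ (forall x, O x -> U x)
              /\ (forall x, O x -> W (g x)).

Definition quasicont {X Z : TopSpace} (g : X -> Z) : Prop :=
  forall a, quasicont_at g a.

Definition lower_quasicont {X Z : TopSpace} (F : X -> Z -> Prop) : Prop :=
  forall x0 U W, nbhd x0 U -> is_open W -> (exists z, F x0 z /\ W z) ->
    exists O, is_open O /\ (exists x, O x) /\ (forall x, O x -> U x)
              /\ (forall x, O x -> exists z, F x z /\ W z).

Definition lower_X_quasicont_at {X Y Z : TopSpace} (f : X -> Y -> Z)
    (a : X) (b : Y) : Prop :=
  forall U V W, nbhd a U -> nbhd b V -> nbhd (f a b) W ->
    exists O, is_open O /\ (exists x, O x) /\ (forall x, O x -> U x)
              /\ (forall x, O x -> exists y, V y /\ W (f x y)).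

Definition section_image {X Y Z : TopSpace} (f : X -> Y -> Z)
    (V : Y -> Prop) (x : X) : Z -> Prop :=
  fun z => exists y, V y /\ f x y = z.

(* Main.v *)
Require Import Defs.

Lemma lxq (X Y Z : TopSpace) (f : X -> Y -> Z) :
  (forall x : X, quasicont (f x) /\
     exists D : Y -> Prop, dense D /\
       forall y, D y -> quasicont_at (fun x' : X => f x' y) x) ->
  (forall (a : X) (b : Y), lower_X_quasicont_at f a b).
Proof.
  intros H a b U V W HU HV HW.
  destruct (H a) as [Hq [D [HD HDq]]].
  destruct HW as [W0 [HW0o [HW0a HW0W]]].
  assert (HW0n : nbhd (f a b) W0) by (exists W0; auto).
  destruct (Hq b V W0 HV HW0n) as [G [HGo [HGne [HGV HGW]]]].
  destruct (HD G HGo HGne) as [y [Gy Dy]].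
  assert (HW0y : nbhd (f a y) W0) by (exists W0; split; [|split]; auto).
  destruct (HDq y Dy U W0 HU HW0y) as [O [HOo [HOne [HOU HOW]]]].
  exists O. split; [exact HOo|]. split; [exact HOne|]. split; [exact HOU|].
  intros x Ox. exists y. split; [apply HGV; exact Gy|]. apply HW0W. apply HOW. exact Ox.
Qed.

Theorem corollary2p4 (X Y Z : TopSpace) (f : X -> Y -> Z) :
  (forall x : X, quasicont (f x) /\
     exists D : Y -> Prop, dense D /\
       forall y, D y -> quasicont_at (fun x' : X => f x' y) x) ->
  (forall (a : X) (b : Y), lower_X_quasicont_at f a b) /\
  (forall V : Y -> Prop, is_open V -> (exists y, V y) ->
     lower_quasicont (section_image f V)).
Proof.
  intros H. pose proof (lxq X Y Z f H) as L. split; [exact L|].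
  intros V HVo _ x0 U W HU HWo [z [[y [Vy Hfy]] Wz]].
  subst z.
  assert (HVn : nbhd y V) by (exists V; auto).
  assert (HWn : nbhd (f x0 y) W) by (exists W; auto).
  destruct (L x0 y U V W HU HVn HWn) as [O [HOo [HOne [HOU HOW]]]].
  exists O. split; [exact HOo|]. split; [exact HOne|]. split; [exact HOU|].
  intros x Ox. destruct (HOW x Ox) as [y' [Vy' Wy']].
  exists (f x y'). split; [exists y'; auto | exact Wy'].
Qed.
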